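(* Let $A$ be a linearly closed proper subset of the abstract linear space $LS^3$. Then $A$ can be topologically embedded in $\mathbb{C}$, i.e. there is a continuous injective map $f:A\to\mathbb{C}$.
   Context: $\mathbb{S}^3$ is the unit sphere of $\mathbb{C}^2$. The abstract linear space $LS^3$ has point set $\mathbb{S}^3$ and abstract lines the sets $L\cap\mathbb{S}^3$ where $L$ is a complex affine line of $\mathbb{C}^2$ meeting $\mathbb{S}^3$ in more than one point; any two distinct points of $\mathbb{S}^3$ lie on exactly one abstract line. A subset $A\subset\mathbb{S}^3$ is linearly closed if for any two distinct $x,y\in A$ the abstract line through $x$ and $y$ is contained in $A$. Proper means $A\neq\mathbb{S}^3$. *)

(* Defs.v *)
From Stdlib Require Import Reals.
From Coquelicot Require Import Coquelicot.

(* C^2 as pairs of complex numbers; topology = product topology (= norm topology). *)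
Definition C2 : Type := (C * C)%type.

Definition S3 (p : C2) : Prop :=
  (Cmod (fst p) ^ 2 + Cmod (snd p) ^ 2 = 1)%R.

Definition is_complex_affine_line (L : C2 -> Prop) : Prop :=
  exists (a v : C2), v <> (RtoC 0, RtoC 0) /\
    forall q : C2, L q <->
      exists t : C, q = (Cplus (fst a) (Cmult t (fst v)),
                         Cplus (snd a) (Cmult t (snd v))).

Definition abstract_line (l : C2 -> Prop) : Prop :=
  exists L : C2 -> Prop, is_complex_affine_line L /\
    (exists x y : C2, x <> y /\ L x /\ S3 x /\ L y /\ S3 y) /\
    forall q : C2, l q <-> (L q /\ S3 q).

Definition linearly_closed (A : C2 -> Prop) : Prop :=
  forall x y : C2, A x -> A y -> x <> y ->
    forall l : C2 -> Prop, abstract_line l -> l x -> l y ->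
      forall q : C2, l q -> A q.

(* Main.v *)
Require Import Defs.
From Stdlib Require Import Reals Lra Psatz Classical.
From Coquelicot Require Import Coquelicot.

Lemma line_eq (l m k : C) : (l <> RtoC 0 \/ m <> RtoC 0) ->
  is_complex_affine_line (fun q => Cplus (Cmult l (fst q)) (Cmult m (snd q)) = k).
Proof.
intros [H|H].
- exists (Cdiv k l, RtoC 0), (Copp m, l). split.
  + intros E. apply H. injection E; auto.
  + intros [q1 q2]; simpl; split.
    * intros E. exists (Cdiv q2 l). f_equal.
      -- rewrite <- E. field. auto.
      -- field. auto.
    * intros [t E]. injection E as -> ->. field. auto.
- exists (RtoC 0, Cdiv k m), (m, Copp l). split.
  + intros E. apply H. injection E; auto.
  + intros [q1 q2]; simpl; split.
    * intros E. exists (Cdiv q1 m). f_equal.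
      -- field. auto.
      -- rewrite <- E. field. auto.
    * intros [t E]. injection E as -> ->. field. auto.
Qed.

Definition Uf (x r : C2) : C2 :=
  (Cplus (Cmult (fst r) (Cconj (fst x))) (Cmult (snd r) (Cconj (snd x))),
   Cminus (Cmult (fst x) (snd r)) (Cmult (snd x) (fst r))).
Definition Vf (x q : C2) : C2 :=
  (Cminus (Cmult (fst q) (fst x)) (Cmult (snd q) (Cconj (snd x))),
   Cplus (Cmult (fst q) (snd x)) (Cmult (snd q) (Cconj (fst x)))).
Definition x0 : C2 := (RtoC 1, RtoC 0).

Lemma S3_real (p : C2) : S3 p <->
  (fst (fst p) ^ 2 + snd (fst p) ^ 2 + fst (snd p) ^ 2 + snd (snd p) ^ 2 = 1)%R.
Proof. unfold S3. rewrite !Cmod2_alt. unfold Re, Im. split; intros; lra. Qed.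

Lemma N1 (x : C2) : S3 x ->
  Cplus (Cmult (fst x) (Cconj (fst x))) (Cmult (snd x) (Cconj (snd x))) = RtoC 1.
Proof.
intros H. apply S3_real in H. destruct x as [[a b] [c d]]. simpl in *.
unfold Cplus, Cmult, Cconj, RtoC; simpl. f_equal; nra.
Qed.

Lemma VU (x r : C2) : S3 x -> Vf x (Uf x r) = r.
Proof.
intros H. pose proof (N1 x H) as E. destruct x as [x1 x2], r as [r1 r2].
simpl in *. unfold Vf, Uf; simpl.
transitivity (Cmult r1 (Cplus (Cmult x1 (Cconj x1)) (Cmult x2 (Cconj x2))),
              Cmult r2 (Cplus (Cmult x1 (Cconj x1)) (Cmult x2 (Cconj x2)))).
- f_equal; ring.
- rewrite E. f_equal; ring.
Qed.

Lemma UV (x q : C2) : S3 x -> Uf x (Vf x q) = q.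
Proof.
intros H. pose proof (N1 x H) as E. destruct x as [x1 x2], q as [r1 r2].
simpl in *. unfold Vf, Uf; simpl.
transitivity (Cmult r1 (Cplus (Cmult x1 (Cconj x1)) (Cmult x2 (Cconj x2))),
              Cmult r2 (Cplus (Cmult x1 (Cconj x1)) (Cmult x2 (Cconj x2)))).
- f_equal; ring.
- rewrite E. f_equal; ring.
Qed.

Lemma Ux (x : C2) : S3 x -> Uf x x = x0.
Proof.
intros H. pose proof (N1 x H) as E. destruct x as [x1 x2]. simpl in *.
unfold Uf, x0; simpl. rewrite E. f_equal. ring.
Qed.

Lemma Vx0 (x : C2) : Vf x x0 = x.
Proof. destruct x as [x1 x2]. unfold Vf, x0; simpl. f_equal; ring. Qed.

Lemma S3V (x q : C2) : S3 x -> (S3 (Vf x q) <-> S3 q).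
Proof.
intros H. rewrite !S3_real. apply S3_real in H.
destruct x as [[a b] [c d]], q as [[e f] [g h]]. cbn [fst snd] in *.
unfold Vf, Cminus, Cplus, Cmult, Copp, Cconj; cbn [fst snd].
match goal with |- (?L = 1 <-> _)%R =>
  assert (EL : L = ((e^2+f^2+g^2+h^2) * (a^2+b^2+c^2+d^2))%R) by ring end.
rewrite EL, H. split; intros; lra.
Qed.

Lemma Vlin (x a v : C2) (t : C) :
  Vf x (Cplus (fst a) (Cmult t (fst v)), Cplus (snd a) (Cmult t (snd v))) =
  (Cplus (fst (Vf x a)) (Cmult t (fst (Vf x v))), Cplus (snd (Vf x a)) (Cmult t (snd (Vf x v)))).
Proof. unfold Vf; simpl. f_equal; ring. Qed.

Lemma Ulin (x a v : C2) (t : C) :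
  Uf x (Cplus (fst a) (Cmult t (fst v)), Cplus (snd a) (Cmult t (snd v))) =
  (Cplus (fst (Uf x a)) (Cmult t (fst (Uf x v))), Cplus (snd (Uf x a)) (Cmult t (snd (Uf x v)))).
Proof. unfold Uf; simpl. f_equal; ring. Qed.

Lemma cont_fst (A : C2 -> Prop) (x : C2) :
  filterlim (@fst C C) (within A (locally x)) (locally (fst x)).
Proof.
intros P [e He]. exists e. intros y Hy _. apply He. destruct Hy as [H1 H2]. exact H1.
Qed.
Lemma cont_snd (A : C2 -> Prop) (x : C2) :
  filterlim (@snd C C) (within A (locally x)) (locally (snd x)).
Proof.
intros P [e He]. exists e. intros y Hy _. apply He. destruct Hy as [H1 H2]. exact H2.
Qed.

Definition rho (c : C) : R := ((1 + fst c ^ 2 + snd c ^ 2) / 2)%R.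
Lemma S3p (w c : C) : fst w = rho c -> S3 (Cminus (RtoC 1) (Cinv w), Cdiv c w).
Proof.
intros H. unfold S3. rewrite !Cmod2_alt. destruct w as [p q], c as [c d].
unfold Cdiv. unfold rho, Re, Im, Cminus, Cplus, Copp, Cinv, Cdiv, Cmult, RtoC in *; cbn [fst snd] in *.
subst p.
assert (0 < ((1 + c ^ 2 + d ^ 2) / 2)) by nra.
field. nra.
Qed.
Definition cross (b1 b2 b : C) : R :=
  ((fst b2 - fst b1)*(snd b - snd b1) - (snd b2 - snd b1)*(fst b - fst b1))%R.

Lemma K0 (b1 b2 b w : C) : cross b1 b2 b <> 0%R ->
  exists c0 c1 : C, Cplus c0 (Cmult c1 b) = w /\
    fst (Cplus c0 (Cmult c1 b1)) = rho b1 /\ fst (Cplus c0 (Cmult c1 b2)) = rho b2.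
Proof.
intros Hc.
destruct b1 as [B1 C1], b2 as [B2 C2], b as [B D], w as [W1 W2].
unfold cross in Hc; cbn [fst snd] in Hc.
set (e1 := (B1 - B)%R). set (f1 := (C1 - D)%R).
set (e2 := (B2 - B)%R). set (f2 := (C2 - D)%R).
set (s1 := (rho (B1, C1) - W1)%R). set (s2 := (rho (B2, C2) - W1)%R).
set (De := (e2 * f1 - e1 * f2)%R).
assert (HD : De <> 0%R).
{ intro E. apply Hc. unfold De, e1, e2, f1, f2 in E. lra. }
set (u := ((f1 * s2 - f2 * s1) / De)%R). set (v := ((e1 * s2 - e2 * s1) / De)%R).
exists (Cminus (W1, W2) (Cmult (u, v) (B, D))), (u, v).
unfold Cminus, Cplus, Cmult, Copp; cbn [fst snd].
split; [f_equal; ring|].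
split.
- replace (rho (B1, C1)) with (s1 + W1)%R by (unfold s1; ring).
  unfold u, v, De in *. unfold e1, e2, f1, f2 in *. field. exact HD.
- replace (rho (B2, C2)) with (s2 + W1)%R by (unfold s2; ring).
  unfold u, v, De in *. unfold e1, e2, f1, f2 in *. field. exact HD.
Qed.

Lemma lc_transport (A : C2 -> Prop) (x : C2) : S3 x -> linearly_closed A ->
  linearly_closed (fun q => A (Vf x q)).
Proof.
intros Hx hlin x' y' Ax' Ay' Hne l [L [HL [[p [q [Hpq [Lp [Sp [Lq Sq]]]]]] Hl]]] lx' ly' r lr.
apply (hlin (Vf x x') (Vf x y') Ax' Ay') with (l := fun s => l (Uf x s)).
- intro E. apply Hne. rewrite <- (UV x x'), <- (UV x y'), E by auto. reflexivity.
- exists (fun s => L (Uf x s)). split; [|split].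
  + destruct HL as [a [v [Hv HLe]]]. exists (Vf x a), (Vf x v). split.
    * intro E. apply Hv. rewrite <- (UV x v) by auto. rewrite E. unfold Uf; simpl; f_equal; ring.
    * intro s. rewrite HLe. split; intros [t Et]; exists t.
      -- rewrite <- (VU x s) by auto. rewrite Et. apply Vlin.
      -- rewrite Et, Ulin, !UV by auto. reflexivity.
  + exists (Vf x p), (Vf x q). rewrite !UV by auto.
    repeat split; auto; try (apply S3V; auto).
    intro E. apply Hpq. rewrite <- (UV x p), <- (UV x q), E by auto. reflexivity.
  + intro s. rewrite Hl. rewrite <- (S3V x (Uf x s)), VU by auto. tauto.
- simpl. rewrite UV by auto. exact lx'.
- simpl. rewrite UV by auto. exact ly'.
- simpl. rewrite UV by auto. exact lr.
Qed.

Definition label (q : C2) : C := Cdiv (snd q) (Cminus (RtoC 1) (fst q)).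
Definition Vert (A : C2 -> Prop) (b : C) :=
  forall r, S3 r -> r <> x0 -> label r = b -> A r.

Lemma one_minus_nz (r : C2) : S3 r -> r <> x0 -> Cminus (RtoC 1) (fst r) <> RtoC 0.
Proof.
intros Hs Hr E. apply Hr. apply S3_real in Hs.
destruct r as [[a b] [c d]]. unfold Cminus, Cplus, Copp, RtoC in E; cbn [fst snd] in *.
injection E as E1 E2.
assert (a = 1)%R by lra. assert (b = 0)%R by lra. subst a b.
assert (c = 0)%R by nra. assert (d = 0)%R by nra. subst. reflexivity.
Qed.

Lemma S3x0 : S3 x0.
Proof. apply S3_real. unfold x0, RtoC; simpl. ring. Qed.

Lemma V1 (A : C2 -> Prop) : (forall p, A p -> S3 p) -> linearly_closed A -> A x0 ->
  forall y, A y -> y <> x0 -> Vert A (label y).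
Proof.
intros hA hlin H0 y Ay Hy r Sr Hr Lr.
assert (Ny := one_minus_nz y (hA y Ay) Hy).
assert (Nr := one_minus_nz r Sr Hr).
apply (hlin x0 y H0 Ay (not_eq_sym Hy)) with
  (l := fun q => Cplus (Cmult (snd y) (fst q)) (Cmult (Cminus (RtoC 1) (fst y)) (snd q)) = snd y /\ S3 q).
- exists (fun q => Cplus (Cmult (snd y) (fst q)) (Cmult (Cminus (RtoC 1) (fst y)) (snd q)) = snd y).
  split; [apply line_eq; right; exact Ny|split].
  + exists x0, y. repeat split; auto using S3x0.
    * unfold x0; simpl. ring.
    * ring.
  + intro; tauto.
- split; [unfold x0; simpl; ring | apply S3x0].
- split; [ring | auto].
- split; auto.
  assert (Er : snd r = Cmult (label y) (Cminus (RtoC 1) (fst r))).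
  { rewrite <- Lr. unfold label. field. auto. }
  rewrite Er. unfold label. field. auto.
Qed.

Lemma C1_nz (z : C) : z = RtoC 1 -> z <> RtoC 0.
Proof. intros -> E. injection E as E. apply R1_neq_R0. exact E. Qed.

Lemma Pt (c0 c1 c : C) : fst (Cplus c0 (Cmult c1 c)) = rho c ->
  let w := Cplus c0 (Cmult c1 c) in
  w <> RtoC 0 /\ S3 (Cminus (RtoC 1) (Cinv w), Cdiv c w) /\
  (Cminus (RtoC 1) (Cinv w), Cdiv c w) <> x0 /\
  label (Cminus (RtoC 1) (Cinv w), Cdiv c w) = c /\
  Cplus (Cmult (Copp c0) (Cminus (RtoC 1) (Cinv w))) (Cmult c1 (Cdiv c w)) = Cminus (RtoC 1) c0.
Proof.
intros H w.
assert (Hw : w <> RtoC 0).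
{ intro E. change (fst w = rho c) in H. rewrite E in H. unfold rho in H; simpl in H.
  destruct c as [c d]; simpl in H. nra. }
split; [exact Hw|]. split; [apply S3p; exact H|]. split; [|split].
- intro E.
  assert (E1 : Cminus (RtoC 1) (Cinv w) = RtoC 1).
  { change (fst (Cminus (RtoC 1) (Cinv w), Cdiv c w) = RtoC 1). rewrite E. reflexivity. }
  assert (Hf : RtoC 1 = RtoC 0).
  { transitivity (Cmult w (Cminus (RtoC 1) (Cminus (RtoC 1) (Cinv w)))).
    - field. exact Hw.
    - rewrite E1. ring. }
  injection Hf. apply R1_neq_R0.
- unfold label; simpl. field. split; [exact Hw|]. apply C1_nz. ring.
- unfold w in *. field. exact Hw.
Qed.

Lemma K (A : C2 -> Prop) (hlin : linearly_closed A) (b1 b2 b : C) :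
  cross b1 b2 b <> 0%R -> Vert A b1 -> Vert A b2 -> Vert A b.
Proof.
intros Hc HV1 HV2 r Sr Hr Lr.
assert (Hnz := one_minus_nz r Sr Hr).
destruct (K0 b1 b2 b (Cinv (Cminus (RtoC 1) (fst r))) Hc) as [c0 [c1 [E0 [E1 E2]]]].
destruct (Pt c0 c1 b1 E1) as [W1 [S1 [N1' [L1 M1]]]].
destruct (Pt c0 c1 b2 E2) as [W2 [S2 [N2' [L2 M2]]]].
set (w1 := Cplus c0 (Cmult c1 b1)) in *.
set (w2 := Cplus c0 (Cmult c1 b2)) in *.
apply (hlin _ _ (HV1 _ S1 N1' L1) (HV2 _ S2 N2' L2)) with
  (l := fun q => Cplus (Cmult (Copp c0) (fst q)) (Cmult c1 (snd q)) = Cminus (RtoC 1) c0 /\ S3 q).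
- intro E. apply Hc. assert (Eb : b1 = b2) by (rewrite <- L1, <- L2, E; reflexivity).
  rewrite Eb. unfold cross. ring.
- exists (fun q => Cplus (Cmult (Copp c0) (fst q)) (Cmult c1 (snd q)) = Cminus (RtoC 1) c0).
  split; [|split].
  + apply line_eq.
    destruct (classic (c1 = RtoC 0)) as [Z1|Z1]; [left|right; exact Z1].
    intro Z0.
    assert (Hc0 : c0 = RtoC 0).
    { transitivity (Copp (Copp c0)); [ring|]. rewrite Z0. apply injective_projections; simpl; ring. }
    assert (Hf : RtoC 1 = RtoC 0).
    { transitivity (Cmult (Cinv (Cminus (RtoC 1) (fst r))) (Cminus (RtoC 1) (fst r))).
      - field. exact Hnz.
      - rewrite <- E0, Hc0, Z1. ring. }
    injection Hf. apply R1_neq_R0.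
  + exists (Cminus (RtoC 1) (Cinv w1), Cdiv b1 w1), (Cminus (RtoC 1) (Cinv w2), Cdiv b2 w2).
    repeat split; auto.
    intro E. apply Hc. assert (Eb : b1 = b2) by (rewrite <- L1, <- L2, E; reflexivity).
    rewrite Eb. unfold cross. ring.
  + intro; tauto.
- split; auto.
- split; auto.
- split; auto.
  assert (Er : snd r = Cmult b (Cminus (RtoC 1) (fst r))).
  { rewrite <- Lr. unfold label. field. auto. }
  assert (Ec0 : c0 = Cminus (Cinv (Cminus (RtoC 1) (fst r))) (Cmult c1 b)) by (rewrite <- E0; ring).
  rewrite Er, Ec0. field. auto.
Qed.

Lemma sq0 (x y : R) : (x ^ 2 + y ^ 2 = 0)%R -> x = 0%R /\ y = 0%R.
Proof.
intros H. pose proof (pow2_ge_0 x). pose proof (pow2_ge_0 y).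
split.
- destruct (Req_dec x 0) as [|N]; auto. exfalso. apply (pow_nonzero _ 2 N). lra.
- destruct (Req_dec y 0) as [|N]; auto. exfalso. apply (pow_nonzero _ 2 N). lra.
Qed.

Definition b3 (b1 b2 : C) : C :=
  ((fst b1 - (snd b2 - snd b1))%R, (snd b1 + (fst b2 - fst b1))%R).

Lemma cross_perp (b1 b2 : C) : b1 <> b2 -> cross b1 b2 (b3 b1 b2) <> 0%R.
Proof.
intros H E. apply H. destruct b1 as [a b], b2 as [c d]. unfold cross, b3 in E; cbn [fst snd] in E.
assert (E' : ((c - a)^2 + (d - b)^2 = 0)%R) by (rewrite <- E; ring).
destruct (sq0 _ _ E'). f_equal; lra.
Qed.

Lemma cross_line (b1 b2 b : C) : cross b1 b2 b = 0%R -> b <> b1 -> b1 <> b2 ->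
  cross b1 (b3 b1 b2) b <> 0%R.
Proof.
intros H Hb H12 E. destruct b1 as [a1 a2], b2 as [c1 c2], b as [u v].
unfold cross, b3 in *; cbn [fst snd] in *.
set (X := (c1 - a1)%R) in *. set (Y := (c2 - a2)%R) in *.
set (U := (u - a1)%R) in *. set (W := (v - a2)%R) in *.
assert (Id : ((X*U + Y*W)^2 + (X*W - Y*U)^2 = (X^2+Y^2)*(U^2+W^2))%R) by ring.
assert (P : ((X^2+Y^2)*(U^2+W^2) = 0)%R).
{ rewrite <- Id. replace (X*W - Y*U)%R with 0%R by (unfold X, Y, U, W in *; lra).
  replace (X*U + Y*W)%R with 0%R by (unfold X, Y, U, W in *; lra). ring. }
apply Rmult_integral in P. destruct P as [P|P].
- apply H12. assert (X = 0)%R by nra. assert (Y = 0)%R by nra.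
  unfold X, Y in *. f_equal; lra.
- apply Hb. assert (U = 0)%R by nra. assert (W = 0)%R by nra.
  unfold U, W in *. f_equal; lra.
Qed.

Lemma G0 (A : C2 -> Prop) : (forall p, A p -> S3 p) -> linearly_closed A -> A x0 ->
  forall y z, A y -> A z -> y <> x0 -> z <> x0 -> label y <> label z ->
  forall r, S3 r -> A r.
Proof.
intros hA hlin H0 y z Ay Az Hy Hz Hyz r Sr.
assert (Vy := V1 A hA hlin H0 y Ay Hy).
assert (Vz := V1 A hA hlin H0 z Az Hz).
assert (V3 : Vert A (b3 (label y) (label z))).
{ apply (K A hlin (label y) (label z)); auto using cross_perp. }
destruct (classic (r = x0)) as [->|Hr]; auto.
destruct (classic (cross (label y) (label z) (label r) = 0%R)) as [Hc|Hc].
- destruct (classic (label r = label y)) as [Eb|Eb].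
  + apply Vy; auto.
  + apply (K A hlin (label y) (b3 (label y) (label z)) (label r)); auto.
    apply cross_line; auto.
- apply (K A hlin (label y) (label z) (label r)); auto.
Qed.

Lemma Vline (x q : C2) (t : C) :
  Vf x (Cplus (RtoC 1) (Cmult t (Cminus (fst q) (RtoC 1))), Cmult t (snd q)) =
  (Cplus (fst x) (Cmult t (Cminus (fst (Vf x q)) (fst x))),
   Cplus (snd x) (Cmult t (Cminus (snd (Vf x q)) (snd x)))).
Proof. unfold Vf; simpl. f_equal; ring. Qed.

Theorem lemma3p4 (A : C2 -> Prop)
  (hA : forall p : C2, A p -> S3 p)
  (hlin : linearly_closed A)
  (hproper : exists p : C2, S3 p /\ ~ A p) :
  exists f : C2 -> C,
    (forall x : C2, A x -> filterlim f (within A (locally x)) (locally (f x))) /\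
    (forall x y : C2, A x -> A y -> f x = f y -> x = y).
Proof.
destruct (classic (exists a v : C2, v <> (RtoC 0, RtoC 0) /\ forall p, A p ->
  exists t : C, p = (Cplus (fst a) (Cmult t (fst v)), Cplus (snd a) (Cmult t (snd v)))))
  as [[a [v [Hv Hl]]] | Hn].
- destruct (classic (fst v = RtoC 0)) as [Z|Z].
  + assert (Z2 : snd v <> RtoC 0).
    { intro Z2. apply Hv. destruct v as [v1 v2]; simpl in *; subst; reflexivity. }
    exists (@snd C C). split; [intros; apply cont_snd|].
    intros p q Ap Aq E. destruct (Hl p Ap) as [t Et], (Hl q Aq) as [s Es].
    rewrite Et, Es in E |- *. simpl in E.
    assert (t = s).
    { transitivity (Cdiv (Cminus (Cplus (snd a) (Cmult t (snd v))) (snd a)) (snd v)).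
      - field. exact Z2.
      - rewrite E. field. exact Z2. }
    subst; reflexivity.
  + exists (@fst C C). split; [intros; apply cont_fst|].
    intros p q Ap Aq E. destruct (Hl p Ap) as [t Et], (Hl q Aq) as [s Es].
    rewrite Et, Es in E |- *. simpl in E.
    assert (t = s).
    { transitivity (Cdiv (Cminus (Cplus (fst a) (Cmult t (fst v))) (fst a)) (fst v)).
      - field. exact Z.
      - rewrite E. field. exact Z. }
    subst; reflexivity.
- exfalso. destruct hproper as [p [Sp Np]]. apply Np.
  assert (G : forall a v : C2, v <> (RtoC 0, RtoC 0) -> exists p, A p /\ forall t : C,
    p <> (Cplus (fst a) (Cmult t (fst v)), Cplus (snd a) (Cmult t (snd v)))).
  { intros a v Hv. apply NNPP; intro Hc. apply Hn. exists a, v. split; auto.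
    intros q Aq. apply NNPP; intro Ht. apply Hc. exists q. split; auto.
    intros t Et. apply Ht. exists t; auto. }
  assert (NZ : (RtoC 1, RtoC 0) <> (RtoC 0, RtoC 0)).
  { intro E. apply (C1_nz (RtoC 1) eq_refl).
    change (fst (RtoC 1, RtoC 0) = RtoC 0). rewrite E. reflexivity. }
  destruct (G (RtoC 0, RtoC 0) (RtoC 1, RtoC 0) NZ) as [x [Ax _]].
  destruct (G x (RtoC 1, RtoC 0) NZ) as [y [Ay Hy]].
  assert (Hxy : y <> x).
  { intro E. apply (Hy (RtoC 0)). rewrite E. destruct x; simpl; f_equal; ring. }
  assert (NZ2 : (Cminus (fst y) (fst x), Cminus (snd y) (snd x)) <> (RtoC 0, RtoC 0)).
  { intro E. apply Hxy. destruct x as [x1 x2], y as [y1 y2]; simpl in *.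
    assert (E1 : Cminus y1 x1 = RtoC 0).
    { change (fst (Cminus y1 x1, Cminus y2 x2) = RtoC 0). rewrite E. reflexivity. }
    assert (E2 : Cminus y2 x2 = RtoC 0).
    { change (snd (Cminus y1 x1, Cminus y2 x2) = RtoC 0). rewrite E. reflexivity. }
    f_equal.
    - transitivity (Cplus (Cminus y1 x1) x1); [ring|]. rewrite E1. ring.
    - transitivity (Cplus (Cminus y2 x2) x2); [ring|]. rewrite E2. ring. }
  destruct (G x _ NZ2) as [z [Az Hz]]. simpl in Hz.
  assert (Hxz : z <> x).
  { intro E. apply (Hz (RtoC 0)). rewrite E. destruct x; simpl; f_equal; ring. }
  assert (Sx := hA x Ax).
  set (A' := fun q => A (Vf x q)).
  assert (hA' : forall q, A' q -> S3 q).
  { intros q Aq. apply (S3V x q Sx). apply hA. exact Aq. }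
  assert (hlin' : linearly_closed A') by (apply lc_transport; auto).
  assert (H0' : A' x0) by (unfold A'; rewrite Vx0; exact Ax).
  assert (Ay' : A' (Uf x y)) by (unfold A'; rewrite VU; auto).
  assert (Az' : A' (Uf x z)) by (unfold A'; rewrite VU; auto).
  assert (Hy' : Uf x y <> x0).
  { intro E. apply Hxy. rewrite <- (VU x y), E, Vx0 by auto. reflexivity. }
  assert (Hz' : Uf x z <> x0).
  { intro E. apply Hxz. rewrite <- (VU x z), E, Vx0 by auto. reflexivity. }
  assert (Hl : label (Uf x y) <> label (Uf x z)).
  { intro E.
    set (y' := Uf x y) in *. set (z' := Uf x z) in *.
    assert (Ny := one_minus_nz y' (hA' _ Ay') Hy').
    assert (Nz := one_minus_nz z' (hA' _ Az') Hz').
    set (t := Cdiv (Cminus (RtoC 1) (fst z')) (Cminus (RtoC 1) (fst y'))).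
    assert (Ez : z' = (Cplus (RtoC 1) (Cmult t (Cminus (fst y') (RtoC 1))), Cmult t (snd y'))).
    { destruct z' as [z1 z2] eqn:Ez'. simpl in *. f_equal.
      - unfold t. field. exact Ny.
      - transitivity (Cmult (Cminus (RtoC 1) z1) (label (z1, z2))).
        + unfold label; simpl. field. exact Nz.
        + rewrite <- E. unfold label, t; simpl. field. exact Ny. }
    apply (Hz t).
    rewrite <- (VU x z) by auto. fold z'. rewrite Ez, Vline. unfold y'. rewrite VU by auto.
    reflexivity. }
  assert (HA := G0 A' hA' hlin' H0' _ _ Ay' Az' Hy' Hz' Hl (Uf x p)).
  unfold A' in HA. rewrite VU in HA by auto. apply HA.
  apply (S3V x (Uf x p) Sx). rewrite VU by auto. exact Sp.
Qed.
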